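(* Let $K$ be a nilpotent group of class $3$, let $x,y\in K$, and let $\alpha>1$ be an integer such that the elements $x^{2^{\alpha}}$, $[x,y]^{2^{\alpha-1}}$ and $x^{2^{\alpha-1}}[x,y]^{-2^{\alpha-2}}$ all centralize $\langle x,y\rangle$. Then $y^{2^{\alpha-1}}$ commutes with $x$.
   Context: Commutators are $[x,y]=x^{-1}y^{-1}xy$, left-normed: $[x,y,z]=[[x,y],z]$. *)

(* Defs.v *)
From Stdlib Require Import Arith.

Record Group := {
  carrier :> Type;
  gmul : carrier -> carrier -> carrier;
  ginv : carrier -> carrier;
  gone : carrier;
  gmulA : forall a b c, gmul a (gmul b c) = gmul (gmul a b) c;
  gmul1l : forall a, gmul gone a = a;
  gmul1r : forall a, gmul a gone = a;
  gmulVl : forall a, gmul (ginv a) a = gone;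
  gmulVr : forall a, gmul a (ginv a) = gone
}.

Arguments gmul {g}.
Arguments ginv {g}.
Arguments gone {g}.

Fixpoint gpow {K : Group} (x : K) (n : nat) : K :=
  match n with
  | O => gone
  | S m => gmul (gpow x m) x
  end.

Definition comm {K : Group} (x y : K) : K :=
  gmul (gmul (gmul (ginv x) (ginv y)) x) y.

Inductive gen {K : Group} (S : K -> Prop) : K -> Prop :=
  | gen_in : forall s, S s -> gen S s
  | gen_one : gen S gone
  | gen_mul : forall a b, gen S a -> gen S b -> gen S (gmul a b)
  | gen_inv : forall a, gen S a -> gen S (ginv a).

(* lower central series: lcs n = gamma_{n+1}(K);
   gamma_1 = K, gamma_{i+1} = [gamma_i, K] *)
Fixpoint lcs (K : Group) (n : nat) : K -> Prop :=
  match n with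
  | O => fun _ => True
  | S m => gen (fun z => exists g h, lcs K m g /\ z = comm g h)
  end.

Definition nilpotent_of_class (K : Group) (c : nat) : Prop :=
  (forall z, lcs K c z -> z = gone) /\ (exists z, lcs K (c - 1) z /\ z <> gone).

Definition centralizes {K : Group} (z : K) (H : K -> Prop) : Prop :=
  forall h, H h -> gmul z h = gmul h z.

Definition gen2 {K : Group} (x y : K) : K -> Prop :=
  gen (fun z => z = x \/ z = y).

(* Main.v *)
Require Import Defs.
From Stdlib Require Import Arith Lia.

Local Notation "a ** b" := (gmul a b) (at level 40, left associativity).

Lemma cancel_l (K : Group) (a b c : K) : a ** b = a ** c -> b = c.
Proof. intro H. rewrite <- (gmul1l K b), <- (gmul1l K c), <- (gmulVl K a), <- !gmulA, H. reflexivity. Qed.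

Lemma cancel_r (K : Group) (a b c : K) : b ** a = c ** a -> b = c.
Proof. intro H. rewrite <- (gmul1r K b), <- (gmul1r K c), <- (gmulVr K a), !gmulA, H. reflexivity. Qed.

Lemma pow_add (K : Group) (x : K) a b : gpow x (a + b) = gpow x a ** gpow x b.
Proof. induction b; simpl. rewrite Nat.add_0_r, gmul1r; auto.
  rewrite Nat.add_succ_r; simpl. rewrite IHb, gmulA; auto. Qed.

Lemma pow_S' (K : Group) (x : K) k : gpow x (S k) = x ** gpow x k.
Proof. replace (S k) with (1 + k) by lia. rewrite pow_add; simpl. rewrite gmul1l; auto. Qed.

Lemma pow_mul (K : Group) (x : K) a b : gpow x (a * b) = gpow (gpow x a) b.
Proof. induction b; simpl. rewrite Nat.mul_0_r; auto.
  rewrite Nat.mul_succ_r, pow_add, IHb; auto. Qed.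

Lemma pow_one (K : Group) k : gpow (@gone K) k = gone.
Proof. induction k; simpl; auto. rewrite IHk, gmul1l; auto. Qed.

Lemma conj_pow (K : Group) (a b z : K) k : a ** z = z ** b -> gpow a k ** z = z ** gpow b k.
Proof. intro H; induction k; simpl. rewrite gmul1l, gmul1r; auto.
  rewrite <- gmulA, H, gmulA, IHk, gmulA; auto. Qed.

Lemma comm_pow (K : Group) (a z : K) k : a ** z = z ** a -> gpow a k ** z = z ** gpow a k.
Proof. apply conj_pow. Qed.

Lemma mul_pow (K : Group) (a b : K) k : a ** b = b ** a -> gpow (a ** b) k = gpow a k ** gpow b k.
Proof. intro H; induction k; simpl. rewrite gmul1l; auto.
  rewrite IHk, !gmulA. rewrite <- (gmulA _ (gpow a k) (gpow b k) a).
  rewrite (comm_pow _ _ _ k (eq_sym H)). rewrite !gmulA; auto. Qed.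

Lemma comm_one (K : Group) (a b : K) : comm a b = gone -> a ** b = b ** a.
Proof. unfold comm; intro H. apply (cancel_l _ (ginv a ** ginv b)).
  rewrite (gmulA _ _ a b), H, <- gmulA, (gmulA _ (ginv b) b), gmulVl, gmul1l, gmulVl; auto. Qed.

Lemma comm_rel (K : Group) (a b : K) : a ** b = b ** (a ** comm a b).
Proof. unfold comm. rewrite !gmulA, <- (gmulA _ b a (ginv a)), gmulVr, gmul1r, gmulVr, gmul1l; auto. Qed.

Fixpoint tri k := match k with O => O | S j => tri j + j end.

Lemma tri2 m : tri (2 * m) + m = m * (2 * m).
Proof. induction m. auto. replace (2 * S m) with (S (S (2 * m))) by lia. change (tri (S (S (2*m)))) with (tri (2*m) + 2*m + S (2*m)). nia. Qed.

Lemma lemA (K : Group) (a b c d : K) :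
  a ** b = b ** (a ** c) -> c ** b = b ** (c ** d) -> (forall g, d ** g = g ** d) ->
  forall k, a ** gpow b k = gpow b k ** (a ** (gpow c k ** gpow d (tri k))).
Proof.
  intros Hab Hcb Hd k.
  assert (Hcbk : forall k, gpow c k ** b = b ** (gpow c k ** gpow d k)).
  { intro j. rewrite (conj_pow _ _ _ _ j Hcb), mul_pow; auto. }
  induction k; simpl.
  - rewrite !gmul1l, !gmul1r; auto.
  - rewrite gmulA, IHk, <- gmulA, <- (gmulA _ a), <- (gmulA _ (gpow c k)).
    rewrite (comm_pow _ _ _ _ (Hd b)), (gmulA _ (gpow c k) b), Hcbk, (gmulA _ a (b ** _)), (gmulA _ a b), Hab.
    rewrite (comm_pow _ c c k eq_refl), pow_add, !gmulA.
    rewrite <- (gmulA _ _ (gpow d k) (gpow d (tri k))), <- pow_add, Nat.add_comm, pow_add, gmulA.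
    reflexivity.
Qed.

Lemma lemB (K : Group) (a b c f : K) :
  a ** b = b ** (a ** c) -> c ** a = a ** (c ** f) -> (forall g, f ** g = g ** f) ->
  forall k, gpow a k ** b = b ** (gpow a k ** (gpow c k ** gpow f (tri k))).
Proof.
  intros Hab Hca Hf k.
  assert (Hcak : forall k, gpow c k ** a = a ** (gpow c k ** gpow f k)).
  { intro j. rewrite (conj_pow _ _ _ _ j Hca), mul_pow; auto. }
  induction k; simpl.
  - rewrite !gmul1l, !gmul1r; auto.
  - rewrite <- gmulA, Hab, gmulA, IHk.
    rewrite <- (gmulA _ b), <- (gmulA _ (gpow a k)), <- (gmulA _ (gpow c k)).
    rewrite (gmulA _ (gpow f (tri k)) a), (comm_pow _ _ _ _ (Hf a)).
    rewrite <- (gmulA _ a), (gmulA _ (gpow c k) a), Hcak.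
    rewrite !gmulA.
    rewrite <- (gmulA _ _ (gpow f k) (gpow f (tri k))), <- pow_add.
    rewrite <- (gmulA _ _ (gpow f (k + tri k)) c), (comm_pow _ _ _ _ (Hf c)).
    rewrite Nat.add_comm, !gmulA. reflexivity.
Qed.

Theorem lemma6p1 (K : Group) (x y : K) (alpha : nat) :
  nilpotent_of_class K 3 ->
  1 < alpha ->
  centralizes (gpow x (2 ^ alpha)) (gen2 x y) ->
  centralizes (gpow (comm x y) (2 ^ (alpha - 1))) (gen2 x y) ->
  centralizes (gmul (gpow x (2 ^ (alpha - 1)))
                    (ginv (gpow (comm x y) (2 ^ (alpha - 2))))) (gen2 x y) ->
  gmul (gpow y (2 ^ (alpha - 1))) x = gmul x (gpow y (2 ^ (alpha - 1))).
Proof.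
  intros [Hc3 _] Ha _ H2 H3.
  assert (Hc : forall u v g h : K, comm (comm u v) g ** h = h ** comm (comm u v) g).
  { intros u v g h. apply comm_one, Hc3. simpl. apply gen_in. exists (comm (comm u v) g), h.
    split; [|reflexivity]. apply gen_in. exists (comm u v), g. split; [|reflexivity].
    apply gen_in. exists u, v. split; [exact I|reflexivity]. }
  set (c := comm x y) in *.
  set (d := comm c y). set (f := comm c x).
  assert (Hd : forall g, d ** g = g ** d) by (intro; apply Hc).
  assert (Hf : forall g, f ** g = g ** f) by (intro; apply Hc).
  assert (Hn : 2 ^ (alpha - 1) = 2 * 2 ^ (alpha - 2))
    by (replace (alpha - 1) with (S (alpha - 2)) by lia; reflexivity).
  set (n := 2 ^ (alpha - 1)) in *. set (m := 2 ^ (alpha - 2)) in *.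
  assert (Htri : tri n = m * (2 * m - 1)) by (rewrite Hn; pose proof (tri2 m); nia).
  assert (Htri2 : tri n + m = n * m) by (rewrite Hn, tri2; lia).
  assert (hx : gen2 x y x) by (apply gen_in; auto).
  assert (hy : gen2 x y y) by (apply gen_in; auto).
  set (w := gpow x n ** ginv (gpow c m)) in *.
  assert (Hw : gpow x n = w ** gpow c m) by (unfold w; rewrite <- gmulA, gmulVl, gmul1r; auto).
  pose proof (H3 x hx) as H3x. pose proof (H3 y hy) as H3y.
  assert (Rxy : x ** y = y ** (x ** c)) by apply comm_rel.
  assert (Rcx : c ** x = x ** (c ** f)) by apply comm_rel.
  assert (Rcy : c ** y = y ** (c ** d)) by apply comm_rel.
  assert (Hcak : forall k, gpow c k ** x = x ** (gpow c k ** gpow f k)).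
  { intro j. rewrite (conj_pow _ _ _ _ j Rcx), mul_pow; auto. }
  assert (Hcbk : forall k, gpow c k ** y = y ** (gpow c k ** gpow d k)).
  { intro j. rewrite (conj_pow _ _ _ _ j Rcy), mul_pow; auto. }
  assert (Hfm : gpow f m = gone).
  { assert (E : gpow c m ** x = x ** gpow c m).
    { apply (cancel_l _ w). rewrite gmulA, <- Hw, (gmulA _ w x), H3x, <- gmulA, <- Hw.
      apply comm_pow; auto. }
    rewrite Hcak in E. apply cancel_l in E.
    symmetry. apply (cancel_l _ (gpow c m)). rewrite gmul1r; auto. }
  assert (Hcd : gpow c n = gpow d m).
  { pose proof (lemB _ _ _ _ _ Rxy Rcx Hf n) as E.
    rewrite Htri, pow_mul, Hfm, pow_one, gmul1r in E.
    assert (E2 : gpow x n ** y = y ** (gpow x n ** gpow d m)).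
    { rewrite Hw, <- (gmulA _ w), Hcbk, (gmulA _ w y), H3y, !gmulA. reflexivity. }
    rewrite E2 in E. apply cancel_l, cancel_l in E. symmetry; auto. }
  assert (Hdn : gpow d n = gone).
  { pose proof (H2 y hy) as E. rewrite Hcbk in E. apply cancel_l in E.
    symmetry. apply (cancel_l _ (gpow c n)). rewrite gmul1r; auto. }
  rewrite (lemA _ _ _ _ _ Rxy Rcy Hd n), Hcd, <- pow_add, Nat.add_comm, Htri2, pow_mul, Hdn,
    pow_one, gmul1r. reflexivity.
Qed.
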